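(* For any graph $G=(V,E)$, the evolution algebras $\mathcal{A}(G)$ and $\mathcal{A}_{RW}(G)$ are strongly isotopic; that is, there exist non-singular $\mathbb{R}$-linear maps $f,h:\mathcal{A}(G)\to\mathcal{A}_{RW}(G)$ such that $f(u)\cdot f(v)=h(u\cdot v)$ for all $u,v\in\mathcal{A}(G)$.
   Context: Graphs are simple (no loops or multiple edges), connected, with a countable (finite or infinite) vertex set $V$, and locally finite: $\deg(i)<\infty$ for every vertex $i$, where $\deg(i)$ is the number of neighbors of $i$. The adjacency matrix is $A=(a_{ij})$ with $a_{ij}=1$ if $i,j$ are neighbors and $0$ otherwise. An evolution algebra over $\mathbb{R}$ is an algebra with a countable basis $\{e_i\}$ (natural basis) such that $e_i\cdot e_j=0$ for $i\neq j$ and $e_i\cdot e_i=\sum_k c_{ik}e_k$. $\mathcal{A}(G)$ is the evolution algebra with natural basis $\{e_i:i\in V\}$ and $e_i\cdot e_i=\sum_{k\in V}a_{ik}e_k$, $e_i\cdot e_j=0$ for $i\ne j$. $\mathcal{A}_{RW}(G)$ is the evolution algebra with natural basis $\{e_i:i\in V\}$ and $e_i\cdot e_i=\sum_{k\in V}\frac{a_{ik}}{\deg(i)}e_k$, $e_i\cdot e_j=0$ for $i\ne j$ (the algebra of the symmetric random walk on $G$). A triple $(f,g,h)$ of non-singular linear maps $\mathcal{A}\to\mathcal{B}$ with $f(u)\cdot g(v)=h(u\cdot v)$ for all $u,v$ is an isotopism; it is a strong isotopism if $f=g$. *)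

(* Defs.v *)
From HB Require Import structures.
From mathcomp Require Import all_boot all_order all_algebra.
From mathcomp Require Import boolp classical_sets fsbigop.
From mathcomp Require Import reals Rstruct.
From Stdlib Require Import Rdefinitions.
Set Implicit Arguments. Unset Strict Implicit. Unset Printing Implicit Defensive.
Import Order.TTheory GRing.Theory Num.Theory.
Local Open Scope ring_scope.
Local Open Scope classical_set_scope.

Definition simple_graph (V : Type) (adj : rel V) : Prop :=
  (forall i j, adj i j = adj j i) /\ (forall i, ~~ adj i i).

Definition connected_graph (V : Type) (adj : rel V) : Prop :=
  forall i j : V, exists p : seq V, path adj i p /\ last i p = j.

Definition locally_finite (V : eqType) (adj : rel V) : Prop :=
  forall i : V, exists s : seq V, forall j, adj i j -> j \in s.

Definition is_graph (V : countType) (adj : rel V) : Prop :=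
  [/\ simple_graph adj, connected_graph adj & locally_finite adj].

Definition deg (V : countType) (adj : rel V) (i : V) : nat :=
  (\sum_(j \in [set: V]) (adj i j : nat))%N.

Definition adjmx (V : countType) (adj : rel V) (i k : V) : R :=
  (adj i k)%:R.

Definition rwmx (V : countType) (adj : rel V) (i k : V) : R :=
  (adj i k)%:R / (deg adj i)%:R.

(* Elements of an evolution algebra with natural basis {e_i : i in V}:
   finitely supported coordinate functions V -> R. *)
Definition finsupp (V : countType) (u : V -> R) : Prop :=
  exists s : seq V, forall i, i \notin s -> u i = 0.

(* Product of the evolution algebra with structure constants c:
   e_i e_i = sum_k c i k e_k, e_i e_j = 0 (i <> j); hence
   (u v)_k = sum_i u_i v_i c_ik. *)
Definition evo_mul (V : countType) (c : V -> V -> R) (u v : V -> R) : V -> R :=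
  fun k => \sum_(i \in [set: V]) (u i * v i * c i k).

Definition nonsingular_linear (V : countType) (f : (V -> R) -> (V -> R)) : Prop :=
  [/\ (forall u, finsupp u -> finsupp (f u)),
      (forall (a : R) u v, finsupp u -> finsupp v ->
         f (fun k => a * u k + v k) = (fun k => a * f u k + f v k)),
      (forall u v, finsupp u -> finsupp v -> f u = f v -> u = v) &
      (forall w, finsupp w -> exists2 u, finsupp u & f u = w)].

Definition strongly_isotopic (V : countType) (c d : V -> V -> R) : Prop :=
  exists f h : (V -> R) -> (V -> R),
    [/\ nonsingular_linear f, nonsingular_linear h &
        forall u v, finsupp u -> finsupp v ->
          evo_mul d (f u) (f v) = h (evo_mul c u v)].

(* Main.v *)
Require Import Defs.
From mathcomp Require Import all_boot all_order all_algebra.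
From mathcomp Require Import boolp classical_sets fsbigop reals Rstruct cardinality.
From Stdlib Require Import Rdefinitions.
From mathcomp Require Import ring.
Import Order.TTheory GRing.Theory Num.Theory.
Local Open Scope ring_scope.
Local Open Scope classical_set_scope.

Lemma deg0_noadj (V : countType) (adj : rel V) i k :
  locally_finite adj -> deg adj i = 0%N -> adj i k = false.
Proof.
move=> lf d0; apply/negP => aik.
have [s hs] := lf i.
move: d0; rewrite /deg fsbig_supp.
set S := (X in \big[_/_]_(j \in X) _).
have fS : finite_set S.
  apply: (sub_finite_set _ (finite_seq s)) => j [_ /=].
  by case: (adj i j) (hs j) => //= ->.
have Sk : S k by split => //=; rewrite aik.
by rewrite (fsbigD1 k S) //= aik.
Qed.

Theorem theorem2p2 (V : countType) (adj : rel V) :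
  is_graph adj -> strongly_isotopic (adjmx adj) (rwmx adj).
Proof.
case=> _ _ lf.
pose s i : R := if deg adj i == 0%N then 1 else Num.sqrt ((deg adj i)%:R).
have s0 i : s i != 0.
  rewrite /s; case: (deg adj i =P 0%N) => [_|/eqP d]; first exact: oner_neq0.
  by rewrite sqrtr_eq0 -ltNge ltr0n lt0n.
pose f (u : V -> R) := fun i => s i * u i.
exists f, id; split.
- split.
  + by move=> u [l hl]; exists l; rewrite /f => i /hl ->; rewrite mulr0.
  + by move=> a u v _ _; apply: funext => k; rewrite /f; ring.
  + move=> u v _ _ e; apply: funext => k.
    have := congr1 (fun g => g k) e; rewrite /f => /eqP.
    by rewrite (inj_eq (mulfI (s0 k))) => /eqP.
  + move=> w [l hl]; exists (fun i => w i / s i).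
      by exists l => i /hl ->; rewrite mul0r.
    by apply: funext => k; rewrite /f mulrC -mulrA mulVf // mulr1.
- split=> //; by move=> w fw; exists w.
- move=> u v _ _; rewrite /evo_mul; apply: funext => k.
  suff E : forall i, f u i * f v i * rwmx adj i k = u i * v i * adjmx adj i k.
    by rewrite (eq_fsbigr (fun i => u i * v i * adjmx adj i k)) // => i _; exact: E i.
  move=> i.
  rewrite /f /rwmx /adjmx /s RdivE.
  case: (deg adj i =P 0%N) => [d|/eqP d].
    by rewrite (@deg0_noadj _ _ i k lf d) /= ?mul0r ?mulr0.
  have dpos : (0 : R) < (deg adj i)%:R by rewrite ltr0n lt0n.
  have ss : Num.sqrt ((deg adj i)%:R : R) * Num.sqrt ((deg adj i)%:R) = (deg adj i)%:R.
    by rewrite -expr2 sqr_sqrtr // ltW.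
  have dn0 : ((deg adj i)%:R : R) != 0 by rewrite gt_eqF.
  have q0 : Num.sqrt ((deg adj i)%:R : R) != 0 by rewrite sqrtr_eq0 -ltNge.
  move: ss q0; set q := Num.sqrt _ => ss q0; rewrite -ss; field.
  exact q0.
Qed.
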